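(* Let $Q$ be a key polynomial for $\nu$ and let $f,q,r\in K[x]$ with $f=qQ+r$ and $\gamma:=\max\{\epsilon(f),\epsilon(r)\}<\epsilon(Q)$. Then \[ \nu_Q(qQ)-(\epsilon(Q)-\gamma)\ \ge\ \nu(f)=\nu(r). \]
   Context: Let $K$ be a field and $\nu$ a rank one valuation on $K[x]$ (values in $\mathbb{R}\cup\{\infty\}$). For $f\in K[x]$ and $b\ge 0$, $\partial_bf$ denotes the $b$-th Hasse derivative of $f$ (defined by $f(x+y)=\sum_b\partial_bf(x)y^b$). For nonconstant $f$ set $\epsilon(f)=\max_{1\le b\le\deg f}\frac{\nu(f)-\nu(\partial_bf)}{b}$ (with $\epsilon(c)=-\infty$ for constants $c$). A monic $Q\in K[x]$ is a key polynomial for $\nu$ if for every $f\in K[x]$, $\epsilon(f)\ge\epsilon(Q)$ implies $\deg f\ge\deg Q$. For a monic $Q$ of degree $n\ge1$, every $f\in K[x]$ has a unique $Q$-expansion $f=\sum_{i=0}^ra_iQ^i$ with $\deg a_i<n$, and the truncation is $\nu_Q(f)=\min_i\nu(a_iQ^i)$. *)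

(* Defs.v *)
From HB Require Import structures.
From mathcomp Require Import all_boot all_order all_algebra.
From mathcomp Require Import reals constructive_ereal.
Set Implicit Arguments. Unset Strict Implicit. Unset Printing Implicit Defensive.
Import Order.TTheory GRing.Theory Num.Theory.
Local Open Scope ring_scope.
Local Open Scope ereal_scope.

Section Defs.
Variables (K : fieldType) (R : realType).

Definition is_valuation (nu : {poly K} -> \bar R) : Prop :=
  [/\ (forall f, nu f = +oo <-> f = 0%R),
      (forall f, nu f <> -oo),
      (forall f g, nu (f * g)%R = nu f + nu g) &
      (forall f g, mine (nu f) (nu g) <= nu (f + g)%R)].

(* Hasse derivative: nderivn b f is the b-th Hasse derivative of f
   (coefficients f_{b+i} * C(b+i, b)). *)
Definition hasse (b : nat) (f : {poly K}) : {poly K} := nderivn b f.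

Definition epsilon (nu : {poly K} -> \bar R) (f : {poly K}) : \bar R :=
  \big[maxe/-oo]_(1 <= b < size f)
     ((nu f - nu (hasse b f)) * ((b%:R : R)^-1)%:E).

Definition key_polynomial (nu : {poly K} -> \bar R) (Q : {poly K}) : Prop :=
  Q \is monic /\
  forall f : {poly K}, epsilon nu Q <= epsilon nu f -> (size Q <= size f)%N.

(* i-th coefficient of the Q-expansion f = sum_i a_i Q^i, deg a_i < deg Q *)
Definition Qexp_coef (Q f : {poly K}) (i : nat) : {poly K} :=
  ((f %/ Q ^+ i) %% Q)%R.

Definition truncation (nu : {poly K} -> \bar R) (Q f : {poly K}) : \bar R :=
  \big[mine/+oo]_(i < size f) nu (Qexp_coef Q f i * Q ^+ i)%R.

End Defs.

(* Main.v *)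
Require Import Defs.
From HB Require Import structures.
From mathcomp Require Import all_boot all_order all_algebra.
From mathcomp Require Import reals constructive_ereal.
From mathcomp Require Import ring lra zify.
Import Order.TTheory GRing.Theory Num.Theory.
Set Implicit Arguments. Unset Strict Implicit. Unset Printing Implicit Defensive.
Local Open Scope ring_scope.
Definition Tay (K : fieldType) (p : {poly K}) : {poly {poly K}} :=
  (map_poly polyC (map_poly polyC p)).[('X)%:P + 'X].

Lemma TayE (K : fieldType) (p : {poly K}) : Tay p = \poly_(i < size p) (hasse i p).
Proof.
rewrite /Tay nderiv_taylor; last exact: mulrC.
rewrite !size_map_polyC poly_def; apply: eq_bigr => i _.
rewrite !nderivn_map horner_map /=.
have -> : (map_poly polyC (hasse i p)).['X] = hasse i p by exact: comp_polyXr.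
by rewrite mul_polyC.
Qed.

Lemma coef_Tay (K : fieldType) (p : {poly K}) i : (Tay p)`_i = hasse i p.
Proof.
rewrite TayE coef_poly; case: ltnP => // H.
by rewrite /hasse nderivn_poly0.
Qed.

Lemma Leibniz (K : fieldType) (p q : {poly K}) k :
  hasse k (p * q) = \sum_(i < k.+1) hasse i p * hasse (k - i) q.
Proof.
have H : Tay (p * q) = Tay p * Tay q.
  by rewrite /Tay !rmorphM /= hornerM.
by rewrite -coef_Tay H coefM; apply: eq_bigr => i _; rewrite !coef_Tay.
Qed.

Lemma Qexp_sum_gen (K : fieldType) (Q f : {poly K}) n :
  f = \sum_(i < n) Qexp_coef Q f i * Q ^+ i + (f %/ Q ^+ n) * Q ^+ n.
Proof.
elim: n => [|n IH]; first by rewrite big_ord0 add0r expr0 divp1 mulr1.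
rewrite {1}IH big_ord_recr /= -addrA; congr (_ + _).
rewrite {1}(divp_eq (f %/ Q ^+ n) Q) divp_divl mulrDl -mulrA -exprSr.
by rewrite addrC exprS /Qexp_coef.
Qed.

Lemma Qexp_sum (K : fieldType) (Q f : {poly K}) :
  (1 < size Q)%N -> f = \sum_(i < size f) Qexp_coef Q f i * Q ^+ i.
Proof.
move=> HQ; rewrite {1}(Qexp_sum_gen Q f (size f)).
have [->|nz] := eqVneq f 0%R; first by rewrite size_poly0 big_ord0 div0p mul0r addr0.
rewrite divp_small ?mul0r ?addr0 //.
have := size_exp Q (size f).
case: (size (Q ^+ size f)) => [|s] /= H.
  move: H; move/eqP; rewrite eq_sym muln_eq0 size_poly_eq0 (negbTE nz) orbF. by rewrite -subn1 subn_eq0 leqNgt HQ.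
rewrite ltnS H; apply: leq_pmull. by rewrite -subn1 subn_gt0.
Qed.

Local Open Scope ereal_scope.
Lemma nu_fin (K : fieldType) (R : realType) (nu : {poly K} -> \bar R) f :
  is_valuation nu -> f != 0%R -> nu f = (fine (nu f))%:E.
Proof.
case=> H0 Hn _ _ nz; move: (H0 f) (Hn f); case: (nu f) => //.
- by case=> /(_ erefl) H _; rewrite H eqxx in nz.
Qed.

Lemma nu0 (K : fieldType) (R : realType) (nu : {poly K} -> \bar R) :
  is_valuation nu -> nu 0%R = +oo.
Proof. by case=> H0 _ _ _; apply/H0. Qed.

Lemma nu1 (K : fieldType) (R : realType) (nu : {poly K} -> \bar R) :
  is_valuation nu -> nu 1%R = 0.
Proof.
move=> Hv; have E2 := nu_fin Hv (oner_neq0 _).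
case: Hv => _ _ HM _; have := HM 1%R 1%R; rewrite mulr1 E2 -EFinD => /eqP.
rewrite eqe => /eqP E; congr (_%:E).
have : (fine (nu 1%R) + fine (nu 1%R) - fine (nu 1%R) = fine (nu 1%R) - fine (nu 1%R))%R.
  by rewrite -E.
by rewrite addrK subrr.
Qed.

Lemma nuM (K : fieldType) (R : realType) (nu : {poly K} -> \bar R) f g :
  is_valuation nu -> nu (f * g)%R = nu f + nu g.
Proof. by case=> _ _ H _; apply: H. Qed.

Lemma nuD (K : fieldType) (R : realType) (nu : {poly K} -> \bar R) f g :
  is_valuation nu -> mine (nu f) (nu g) <= nu (f + g)%R.
Proof. by case=> _ _ _ H; apply: H. Qed.

Lemma nuN (K : fieldType) (R : realType) (nu : {poly K} -> \bar R) f :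
  is_valuation nu -> nu (- f)%R = nu f.
Proof.
move=> Hv; have Hm1 : nu (-1)%R = 0.
  have E := @nu_fin K R nu (-1)%R Hv (ltac:(by rewrite oppr_eq0 oner_eq0)).
  have := nuM (-1)%R (-1)%R Hv; rewrite mulrNN mulr1 nu1 // E -EFinD => /eqP.
  rewrite eq_sym eqe => /eqP E'; rewrite E; congr (_%:E).
  have : (fine (nu (-1)%R) + fine (nu (-1)%R) - fine (nu (-1)%R) = 0 - fine (nu (-1)%R))%R.
    by rewrite E'.
  by rewrite addrK sub0r => /eqP; rewrite -subr_eq0 opprK -mulr2n mulrn_eq0 /= => /eqP.
by rewrite -mulN1r nuM // Hm1 add0e.
Qed.

Lemma nuB (K : fieldType) (R : realType) (nu : {poly K} -> \bar R) f g :
  is_valuation nu -> mine (nu f) (nu g) <= nu (f - g)%R.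
Proof. by move=> Hv; rewrite -(nuN g Hv); apply: nuD. Qed.

Lemma nu_strict (K : fieldType) (R : realType) (nu : {poly K} -> \bar R) u w :
  is_valuation nu -> nu u < nu w -> nu (u + w)%R = nu u.
Proof.
move=> Hv lt; apply/eqP; rewrite eq_le; apply/andP; split; last first.
  by have := nuD u w Hv; rewrite /Order.min lt.
have := nuB (u + w)%R w Hv; rewrite addrK.
rewrite ge_min => /orP [//|H2].
by move: lt; rewrite ltNge H2.
Qed.

Lemma nu_sum_ge (K : fieldType) (R : realType) (nu : {poly K} -> \bar R)
  (I : Type) (r : seq I) (P : pred I) (F : I -> {poly K}) x :
  is_valuation nu -> (forall i, P i -> x <= nu (F i)) ->
  x <= nu (\sum_(i <- r | P i) F i)%R.
Proof.
move=> Hv H; apply: (big_ind (fun y => x <= nu y)) => //.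
- by rewrite nu0 // leey.
- move=> a b Ha Hb; apply: le_trans (nuD a b Hv); by rewrite le_min Ha Hb.
Qed.

Lemma nu_sum_gt (K : fieldType) (R : realType) (nu : {poly K} -> \bar R)
  (I : Type) (r : seq I) (P : pred I) (F : I -> {poly K}) (x : R) :
  is_valuation nu -> (forall i, P i -> x%:E < nu (F i)) ->
  x%:E < nu (\sum_(i <- r | P i) F i)%R.
Proof.
move=> Hv H; apply: (big_ind (fun y => x%:E < nu y)) => //.
- by rewrite nu0 // ltry.
- move=> a b Ha Hb; apply: lt_le_trans (nuD a b Hv); by rewrite lt_min Ha Hb.
Qed.

Definition eterm (K : fieldType) (R : realType) (nu : {poly K} -> \bar R) (h : {poly K}) (b : nat) :=
  ((nu h - nu (hasse b h)) * ((b%:R : R)^-1)%:E).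

Lemma eps_ge (K : fieldType) (R : realType) (nu : {poly K} -> \bar R) (h : {poly K}) k :
  (1 <= k < size h)%N -> eterm nu h k <= epsilon nu h.
Proof.
move=> Hk; rewrite /epsilon; apply: (le_bigmax_seq _ k) => //.
by rewrite mem_index_iota.
Qed.

Lemma eterm_fin (K : fieldType) (R : realType) (nu : {poly K} -> \bar R) (h : {poly K}) k w :
  is_valuation nu -> h != 0%R -> nu (hasse k h) = w%:E ->
  eterm nu h k = (((fine (nu h)) - w) / k%:R)%:E.
Proof. by move=> Hv nz E; rewrite /eterm E (nu_fin Hv nz). Qed.

Lemma eterm_inf (K : fieldType) (R : realType) (nu : {poly K} -> \bar R) (h : {poly K}) k :
  is_valuation nu -> h != 0%R -> (0 < k)%N -> nu (hasse k h) = +oo ->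
  eterm nu h k = -oo.
Proof.
move=> Hv nz k0 E; rewrite /eterm E (nu_fin Hv nz) /= mulNyr.
by rewrite gtr0_sg ?invr_gt0 ?ltr0n // mul1e.
Qed.

Lemma nu_ninfty (K : fieldType) (R : realType) (nu : {poly K} -> \bar R) h :
  is_valuation nu -> nu h <> -oo.
Proof. by case=> _ H _ _. Qed.

Lemma term_le (K : fieldType) (R : realType) (nu : {poly K} -> \bar R) (h : {poly K}) k (x : R) :
  is_valuation nu -> h != 0%R -> (0 < k)%N -> eterm nu h k <= x%:E ->
  ((fine (nu h)) - k%:R * x)%:E <= nu (hasse k h).
Proof.
move=> Hv nz k0; case E: (nu (hasse k h)) => [w||].
- rewrite (eterm_fin Hv nz E) !lee_fin ler_pdivrMr ?ltr0n // => H.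
  by rewrite lerBlDr -lerBlDl mulrC.
- by rewrite leey.
- by have := @nu_ninfty _ _ _ (hasse k h) Hv.
Qed.

Lemma term_lt (K : fieldType) (R : realType) (nu : {poly K} -> \bar R) (h : {poly K}) k (x : R) :
  is_valuation nu -> h != 0%R -> (0 < k)%N -> eterm nu h k < x%:E ->
  ((fine (nu h)) - k%:R * x)%:E < nu (hasse k h).
Proof.
move=> Hv nz k0; case E: (nu (hasse k h)) => [w||].
- rewrite (eterm_fin Hv nz E) !lte_fin ltr_pdivrMr ?ltr0n // => H.
  by rewrite ltrBlDr -ltrBlDl mulrC.
- by rewrite ltry.
- by have := @nu_ninfty _ _ _ (hasse k h) Hv.
Qed.

Lemma term_eq (K : fieldType) (R : realType) (nu : {poly K} -> \bar R) (h : {poly K}) k (x : R) :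
  is_valuation nu -> h != 0%R -> (0 < k)%N -> eterm nu h k = x%:E ->
  nu (hasse k h) = ((fine (nu h)) - k%:R * x)%:E.
Proof.
move=> Hv nz k0; case E: (nu (hasse k h)) => [w||].
- rewrite (eterm_fin Hv nz E) => -[] H; congr (_%:E).
  have kn0 : (k%:R : R) != 0%R by rewrite pnatr_eq0 -lt0n.
  rewrite -H mulrC -mulrA mulVf // mulr1 opprB addrC subrK //.
- by rewrite (eterm_inf Hv nz k0 E).
- by have := @nu_ninfty _ _ _ (hasse k h) Hv.
Qed.

Definition LB (K : fieldType) (R : realType) (nu : {poly K} -> \bar R) (e : R) h (c : R) :=
  forall k, ((c - k%:R * e)%R%:E <= nu (hasse k h)).
Definition SA (K : fieldType) (R : realType) (nu : {poly K} -> \bar R) (e : R) t h (c : R) :=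
  forall k, (t <= k)%N -> ((c - k%:R * e)%R%:E < nu (hasse k h)).
Definition EX (K : fieldType) (R : realType) (nu : {poly K} -> \bar R) (e : R) t h (c : R) :=
  nu (hasse t h) = (c - t%:R * e)%R%:E.

Lemma split_c (R : realType) (c1 c2 e : R) k i : (i <= k)%N ->
  ((c1 - i%:R * e) + (c2 - (k - i)%:R * e) = (c1 + c2) - k%:R * e)%R.
Proof. by move=> H; rewrite natrB // mulrBl; ring. Qed.

Lemma LB_mul (K : fieldType) (R : realType) (nu : {poly K} -> \bar R) e g h c1 c2 :
  is_valuation nu -> LB nu e g c1 -> LB nu e h c2 -> LB nu e (g * h) (c1 + c2).
Proof.
move=> Hv Hg Hh k; rewrite Leibniz; apply: nu_sum_ge => // i _.
rewrite nuM // -(split_c c1 c2 e (ltnSE (ltn_ord i))) EFinD.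
by apply: leeD.
Qed.

Lemma SA_mul (K : fieldType) (R : realType) (nu : {poly K} -> \bar R) e g h c1 c2 t1 t2 :
  is_valuation nu -> LB nu e g c1 -> LB nu e h c2 -> SA nu e t1.+1 g c1 ->
  SA nu e t2.+1 h c2 -> SA nu e (t1 + t2).+1 (g * h) (c1 + c2).
Proof.
move=> Hv Hg Hh Sg Sh k Hk; rewrite Leibniz; apply: nu_sum_gt => // i _.
rewrite nuM // -(split_c c1 c2 e (ltnSE (ltn_ord i))) EFinD.
case: (ltnP t1 i) => Hi.
  by apply: lte_leD => //; apply: Sg.
rewrite [X in X < _]addeC [X in _ < X]addeC; apply: lte_leD => //; apply: Sh.
by rewrite ltn_subRL; lia.
Qed.

Lemma EX_mul (K : fieldType) (R : realType) (nu : {poly K} -> \bar R) e g h c1 c2 t1 t2 :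
  is_valuation nu -> LB nu e g c1 -> LB nu e h c2 -> SA nu e t1.+1 g c1 ->
  SA nu e t2.+1 h c2 -> EX nu e t1 g c1 -> EX nu e t2 h c2 ->
  EX nu e (t1 + t2) (g * h) (c1 + c2).
Proof.
move=> Hv Hg Hh Sg Sh Eg Eh; rewrite /EX Leibniz.
have Ht : (t1 < (t1 + t2).+1)%N by rewrite ltnS leq_addr.
rewrite (bigD1 (Ordinal Ht)) //= nu_strict // nuM // Eg addKn Eh -EFinD.
  by rewrite -(split_c c1 c2 e (leq_addr t2 t1)) addKn.
have := split_c c1 c2 e (leq_addr t2 t1); rewrite addKn => ->.
apply: nu_sum_gt => // i Hi.
rewrite nuM // -(split_c c1 c2 e (ltnSE (ltn_ord i))) EFinD.
have Hne : nat_of_ord i != t1 by move: Hi; apply: contra => /eqP Hi; apply/eqP/val_inj.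
case: (ltnP t1 i) => Hi2.
  by apply: lte_leD => //; apply: Sg.
have Hi3 : (i < t1)%N by rewrite ltn_neqAle Hne Hi2.
rewrite [X in X < _]addeC [X in _ < X]addeC; apply: lte_leD => //; apply: Sh.
by rewrite ltn_subRL ltn_add2r.
Qed.

Lemma LB_add (K : fieldType) (R : realType) (nu : {poly K} -> \bar R) e g h c :
  is_valuation nu -> LB nu e g c -> LB nu e h c -> LB nu e (g + h) c.
Proof.
move=> Hv Hg Hh k; rewrite /hasse nderivnD; apply: le_trans (nuD _ _ Hv).
by rewrite le_min Hg Hh.
Qed.

Lemma SA_add (K : fieldType) (R : realType) (nu : {poly K} -> \bar R) e t g h c :
  is_valuation nu -> SA nu e t g c -> SA nu e t h c -> SA nu e t (g + h) c.
Proof.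
move=> Hv Hg Hh k Hk; rewrite /hasse nderivnD; apply: lt_le_trans (nuD _ _ Hv).
by rewrite lt_min Hg ?Hh.
Qed.

Lemma EX_add (K : fieldType) (R : realType) (nu : {poly K} -> \bar R) e t g h c :
  is_valuation nu -> EX nu e t g c -> SA nu e t h c -> EX nu e t (g + h) c.
Proof.
move=> Hv Hg Hh; rewrite /EX /hasse nderivnD nu_strict //.
by rewrite -/(hasse t g) Hg; apply: Hh.
Qed.

Lemma LB_mono (K : fieldType) (R : realType) (nu : {poly K} -> \bar R) e h c c' :
  (c' <= c)%R -> LB nu e h c -> LB nu e h c'.
Proof.
move=> le H k; apply: le_trans (H k); rewrite lee_fin lerD2r //.
Qed.

Lemma SA_of_lt (K : fieldType) (R : realType) (nu : {poly K} -> \bar R) e h c c' t :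
  (c' < c)%R -> LB nu e h c -> SA nu e t h c'.
Proof.
move=> lt H k _; apply: lt_le_trans (H k); rewrite lte_fin ltrD2r //.
Qed.

Lemma SA_mono (K : fieldType) (R : realType) (nu : {poly K} -> \bar R) e h c t t' :
  (t <= t')%N -> SA nu e t h c -> SA nu e t' h c.
Proof. by move=> le H k Hk; apply: H; apply: leq_trans Hk. Qed.

Lemma prof0 (K : fieldType) (R : realType) (nu : {poly K} -> \bar R) e c t :
  is_valuation nu -> LB nu e 0%R c /\ SA nu e t 0%R c.
Proof.
move=> Hv; split=> k *; rewrite /hasse linear0 nu0 // ?leey ?ltry //.
Qed.

Definition TOP (K : fieldType) (R : realType) (nu : {poly K} -> \bar R) (e : R) t h (c : R) :=
  [/\ LB nu e h c, SA nu e t.+1 h c & EX nu e t h c].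

Lemma TOP_mul (K : fieldType) (R : realType) (nu : {poly K} -> \bar R) e g h c1 c2 t1 t2 :
  is_valuation nu -> TOP nu e t1 g c1 -> TOP nu e t2 h c2 ->
  TOP nu e (t1 + t2) (g * h) (c1 + c2).
Proof.
move=> Hv [L1 S1 E1] [L2 S2 E2]; split.
- exact: LB_mul.
- exact: SA_mul.
- exact: EX_mul.
Qed.

Lemma TOP_base (K : fieldType) (R : realType) (nu : {poly K} -> \bar R) e (a : {poly K}) (c : R) :
  nu a = c%:E -> (forall k, (0 < k)%N -> ((c - k%:R * e)%R%:E < nu (hasse k a))) ->
  TOP nu e 0 a c.
Proof.
move=> E H; split.
- by case=> [|k]; [rewrite /hasse nderivn0 E mul0r subr0|move=> *; apply/ltW/H].
- exact: H.
- by rewrite /EX /hasse nderivn0 E mul0r subr0.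
Qed.

Lemma TOP_one (K : fieldType) (R : realType) (nu : {poly K} -> \bar R) e :
  is_valuation nu -> TOP nu e 0 (1%R : {poly K}) 0%R.
Proof.
move=> Hv; apply: TOP_base; first exact: nu1.
move=> k k0; rewrite /hasse nderivn_poly0 ?nu0 ?ltry //.
by rewrite size_poly1.
Qed.

Lemma TOP_exp (K : fieldType) (R : realType) (nu : {poly K} -> \bar R) e Q c t n :
  is_valuation nu -> TOP nu e t Q c -> TOP nu e (n * t) (Q ^+ n) (n%:R * c).
Proof.
move=> Hv HQ; elim: n => [|n IH].
  by rewrite mul0n mul0r expr0; apply: TOP_one.
rewrite exprS mulSn -addn1 natrD mulrDl mul1r addrC.
exact: TOP_mul.
Qed.

Lemma eps_weak (K : fieldType) (R : realType) (nu : {poly K} -> \bar R) (h : {poly K}) k (x c : R) :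
  is_valuation nu -> epsilon nu h <= x%:E -> (0 < k)%N -> c%:E <= nu h ->
  ((c - k%:R * x)%R%:E <= nu (hasse k h)).
Proof.
move=> Hv He k0 Hc.
have [->|nz] := eqVneq h 0%R; first by rewrite /hasse linear0 nu0 // leey.
case: (ltnP k (size h)) => Hk; last by rewrite /hasse nderivn_poly0 // nu0 // leey.
have Hr : (1 <= k < size h)%N by apply/andP.
have := term_le Hv nz k0 (le_trans (eps_ge nu Hr) He).
apply: le_trans; rewrite lee_fin lerD2r.
by move: Hc; rewrite (nu_fin Hv nz) lee_fin.
Qed.

Lemma eps_strict (K : fieldType) (R : realType) (nu : {poly K} -> \bar R) (h : {poly K}) k (x : R) :
  is_valuation nu -> epsilon nu h < x%:E -> h != 0%R -> (0 < k)%N ->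
  (((fine (nu h)) - k%:R * x)%R%:E < nu (hasse k h)).
Proof.
move=> Hv He nz k0.
case: (ltnP k (size h)) => Hk; last by rewrite /hasse nderivn_poly0 // nu0 // ltry.
have Hr : (1 <= k < size h)%N by apply/andP.
exact: term_lt Hv nz k0 (le_lt_trans (eps_ge nu Hr) He).
Qed.

Lemma bigmax_att (R : realType) (r : seq nat) (F : nat -> \bar R) :
  \big[maxe/-oo]_(i <- r) F i = -oo \/
  exists2 j, j \in r & \big[maxe/-oo]_(i <- r) F i = F j.
Proof.
elim: r => [|a r [IH|[j Hj IH]]]; first by left; rewrite big_nil.
- right; exists a; first by rewrite inE eqxx.
  by rewrite big_cons IH; apply/max_idPl; exact: leNye.
- right; rewrite big_cons IH; case: (leP (F a) (F j)) => H.
  + by exists j; rewrite // inE Hj orbT.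
  + by exists a; rewrite // inE eqxx.
Qed.

Lemma epsE (K : fieldType) (R : realType) (nu : {poly K} -> \bar R) (h : {poly K}) :
  epsilon nu h = \big[maxe/-oo]_(i <- index_iota 1 (size h)) eterm nu h i.
Proof. by []. Qed.

Lemma Q_profile (K : fieldType) (R : realType) (nu : {poly K} -> \bar R) (Q : {poly K}) (e : R) :
  is_valuation nu -> Q != 0%R -> epsilon nu Q = e%:E ->
  exists2 d, (0 < d)%N & TOP nu e d Q (fine (nu Q)).
Proof.
move=> Hv nz He.
have [H|[j Hj Hje]] := bigmax_att (index_iota 1 (size Q)) (eterm nu Q).
  by move: He; rewrite epsE H.
rewrite -epsE He in Hje.
pose P := fun i => (0 < i < size Q)%N && (eterm nu Q i == e%:E).
have Pex : exists i, P i by exists j; rewrite /P -mem_index_iota Hj Hje eqxx.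
have Pb : forall i, P i -> (i <= size Q)%N by move=> i /andP[/andP[_ /ltnW]].
case: (ex_maxnP Pex Pb) => d /andP[/andP[d0 dQ] /eqP Ed] Hmax.
exists d => //; split.
- case=> [|k]; first by rewrite /hasse nderivn0 mul0r subr0 -(nu_fin Hv nz).
  move=> *; apply: eps_weak => //; first by rewrite He.
  by rewrite -(nu_fin Hv nz).
- move=> k Hk.
  case: (ltnP k (size Q)) => HkQ; last by rewrite /hasse nderivn_poly0 // nu0 // ltry.
  have k0 : (0 < k)%N by apply: leq_ltn_trans Hk.
  apply: term_lt => //.
  have Hr : (1 <= k < size Q)%N by apply/andP.
  rewrite lt_neqAle -He eps_ge // andbT He; apply/negP => /eqP Ek.
  have := Hmax k; rewrite /P k0 HkQ Ek eqxx => /(_ erefl); by rewrite leqNgt Hk.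
- exact: term_eq.
Qed.

Lemma key_eps (K : fieldType) (R : realType) (nu : {poly K} -> \bar R) (Q a : {poly K}) :
  key_polynomial nu Q -> (size a < size Q)%N -> epsilon nu a < epsilon nu Q.
Proof.
case=> _ H Ha; rewrite ltNge; apply/negP => /H; by rewrite leqNgt Ha.
Qed.

Lemma nu_exp (K : fieldType) (R : realType) (nu : {poly K} -> \bar R) (Q : {poly K}) n :
  is_valuation nu -> Q != 0%R -> nu (Q ^+ n)%R = (n%:R * fine (nu Q))%R%:E.
Proof.
move=> Hv nz; elim: n => [|n IH]; first by rewrite expr0 nu1 // mul0r.
by rewrite exprS nuM // IH {1}(nu_fin Hv nz) -EFinD mulrSr mulrDl mul1r addrC.
Qed.

Lemma term_TOP (K : fieldType) (R : realType) (nu : {poly K} -> \bar R) (Q a : {poly K}) (e : R) d i :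
  is_valuation nu -> key_polynomial nu Q -> epsilon nu Q = e%:E -> Q != 0%R ->
  TOP nu e d Q (fine (nu Q)) -> (size a < size Q)%N -> a != 0%R ->
  TOP nu e (i * d) (a * Q ^+ i) (fine (nu a) + i%:R * fine (nu Q)) /\
  nu (a * Q ^+ i)%R = (fine (nu a) + i%:R * fine (nu Q))%R%:E.
Proof.
move=> Hv HK He Qnz HQ Ha anz; split; last first.
  by rewrite nuM // nu_exp // {1}(nu_fin Hv anz) -EFinD.
rewrite -[(i * d)%N]add0n; apply: TOP_mul => //; last exact: TOP_exp.
apply: TOP_base; first exact: nu_fin.
move=> k k0; apply: eps_strict => //.
by rewrite -He; apply: key_eps.
Qed.

Lemma main_claim (K : fieldType) (R : realType) (nu : {poly K} -> \bar R) (Q g : {poly K}) (e : R) :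
  is_valuation nu -> key_polynomial nu Q -> epsilon nu Q = e%:E -> (1 < size Q)%N ->
  g != 0%R -> (g %% Q = 0)%R ->
  exists k, (0 < k)%N /\ exists del : R,
    [/\ truncation nu Q g = del%:E, nu (hasse k g) = (del - k%:R * e)%R%:E & del%:E <= nu g].
Proof.
move=> Hv HK He HQs gnz gQ.
have Qnz : Q != 0%R by rewrite -size_poly_gt0; apply: ltn_trans HQs.
have [d d0 HQ] := Q_profile Hv Qnz He.
pose N := size g.
have N0 : (0 < N)%N by rewrite size_poly_gt0.
pose T := fun i : nat => (Qexp_coef Q g i * Q ^+ i)%R.
have Hexp : g = (\sum_(i < N) T i)%R by exact: Qexp_sum.
have [i0 _ Hi0] := @eq_bigmin _ _ _ +oo (Ordinal N0) xpredT (fun i : 'I_N => nu (T i)) isT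
  (fun i _ => leey _).
have Htr : truncation nu Q g = nu (T i0) by rewrite /truncation Hi0.
have Tfin : nu (T i0) != +oo.
  apply/eqP => Hinf; move/eqP: gnz; apply; rewrite Hexp big1 // => i _.
  apply/eqP; case: Hv => H0 _ _ _; apply/eqP/H0.
  apply/eqP; rewrite eq_le leey /=; rewrite -Hinf -Htr /truncation.
  exact: bigmin_le.
pose del := fine (nu (T i0)).
have Hdel : nu (T i0) = del%:E.
  have := @nu_ninfty _ _ nu (T i0) Hv; move: Tfin; rewrite /del.
  by case: (nu (T i0)).
have Hge : forall i : 'I_N, del%:E <= nu (T i).
  move=> i; rewrite -Hdel -Htr; exact: bigmin_le.
pose P := fun i => (i < N)%N && (nu (T i) == del%:E).
have Pex : exists i, P i by exists i0; rewrite /P ltn_ord Hdel eqxx.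
have Pb : forall i, P i -> (i <= N)%N by move=> i /andP[/ltnW].
case: (ex_maxnP Pex Pb) => m /andP[mN /eqP Em] Hmax.
have Tnz : forall i, T i != 0%R -> Qexp_coef Q g i != 0%R.
  by move=> i; apply: contra => /eqP H; rewrite /T H mul0r.
have T0 : forall i, nu (T i) != +oo -> T i != 0%R.
  by move=> i; apply: contra => /eqP ->; rewrite nu0.
have Ha : forall i, (size (Qexp_coef Q g i) < size Q)%N by move=> i; apply: ltn_modpN0.
have m0 : (0 < m)%N.
  rewrite lt0n; apply/negP => /eqP m0; move: Em; rewrite m0 /T /Qexp_coef expr0 divp1 gQ.
  by rewrite mul0r nu0.
have Tmnz : T m != 0%R by apply: T0; rewrite Em.
have [TOPm Em'] := term_TOP m Hv HK He Qnz HQ (Ha m) (Tnz _ Tmnz).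
rewrite Em' in Em; case: Em => Ecm; rewrite Ecm in TOPm.
have Hrest : forall i : 'I_N, i != Ordinal mN ->
    LB nu e (T i) del /\ SA nu e (m * d) (T i) del.
  move=> i Hi.
  have [Tz|Tnz'] := eqVneq (T i) 0%R; first by rewrite Tz; apply: prof0.
  have [[L S _] Ei] := term_TOP i Hv HK He Qnz HQ (Ha i) (Tnz _ Tnz').
  have := Hge i; rewrite Ei lee_fin le_eqVlt => /orP[/eqP Eq|Lt].
    rewrite Eq; split=> //; apply: SA_mono S.
    have Pi : P i by rewrite /P ltn_ord Ei -Eq eqxx.
    have im : (i < m)%N.
      rewrite ltn_neqAle Hmax // andbT; move: Hi; apply: contra => /eqP Him.
      by apply/eqP/val_inj.
    by rewrite ltn_mul2r d0.
  split; first by apply: LB_mono (ltW Lt) L.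
  exact: SA_of_lt Lt L.
have Hsplit : g = (T m + \sum_(i < N | i != Ordinal mN) T i)%R.
  by rewrite {1}Hexp (bigD1 (Ordinal mN)).
have [Lr Sr] : LB nu e (\sum_(i < N | i != Ordinal mN) T i)%R del /\
              SA nu e (m * d) (\sum_(i < N | i != Ordinal mN) T i)%R del.
  apply: (big_ind (fun p => LB nu e p del /\ SA nu e (m * d) p del)).
  - exact: prof0.
  - by move=> x y [Lx Sx] [Ly Sy]; split; [apply: LB_add | apply: SA_add].
  - exact: Hrest.
case: TOPm => Lm Sm Exm.
have Lg : LB nu e g del by rewrite Hsplit; apply: LB_add.
have Eg : EX nu e (m * d) g del by rewrite Hsplit; apply: EX_add.
exists (m * d)%N; split; first by rewrite muln_gt0 m0 d0.
exists del; split => //; first by rewrite Htr.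
by have := Lg 0%N; rewrite /hasse nderivn0 mul0r subr0.
Qed.

Lemma eps_fin (K : fieldType) (R : realType) (nu : {poly K} -> \bar R) (Q : {poly K}) :
  is_valuation nu -> Q != 0%R -> epsilon nu Q <> +oo.
Proof.
move=> Hv nz.
have [H|[j Hj H]] := bigmax_att (index_iota 1 (size Q)) (eterm nu Q); rewrite epsE H //.
have j0 : (0 < j)%N by move: Hj; rewrite mem_index_iota => /andP[].
case E: (nu (hasse j Q)) => [w||].
- by rewrite (eterm_fin Hv nz E).
- by rewrite (eterm_inf Hv nz j0 E).
- by have := @nu_ninfty _ _ nu (hasse j Q) Hv.
Qed.

Lemma key_ineq (K : fieldType) (R : realType) (nu : {poly K} -> \bar R) (f r : {poly K}) k (c x : R) :
  is_valuation nu -> (0 < k)%N -> maxe (epsilon nu f) (epsilon nu r) <= x%:E ->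
  c%:E <= nu f -> c%:E <= nu r -> ((c - k%:R * x)%R%:E <= nu (hasse k (f - r))).
Proof.
move=> Hv k0 Hx Hf Hr; rewrite /hasse nderivnB; apply: le_trans (nuB _ _ Hv).
rewrite le_min; apply/andP; split; apply: eps_weak => //;
  apply: le_trans Hx; by rewrite le_max lexx ?orbT.
Qed.

Local Close Scope ereal_scope.
Unset Implicit Arguments.

Theorem lemma2p1 (K : fieldType) (R : realType) (nu : {poly K} -> \bar R)
  (Q f q r : {poly K}) :
  is_valuation nu -> key_polynomial nu Q -> f = q * Q + r ->
  (maxe (epsilon nu f) (epsilon nu r) < epsilon nu Q)%E ->
  (nu f + (epsilon nu Q - maxe (epsilon nu f) (epsilon nu r))
     <= truncation nu Q (q * Q))%E /\ nu f = nu r.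
Proof.
move=> Hv HK Hf Hlt.
set ga := maxe (epsilon nu f) (epsilon nu r) in Hlt *.
have Qnz : Q != 0 by apply: monic_neq0; case: HK.
have HQs : (1 < size Q)%N.
  rewrite ltnNge; apply/negP => HQ; move: Hlt.
  by rewrite epsE /index_iota (_ : (size Q - 1)%N = 0%N) ?big_nil ?ltNge ?leNye //; lia.
pose e := fine (epsilon nu Q).
have He : epsilon nu Q = e%:E.
  have := eps_fin Hv Qnz; rewrite /e; move: Hlt.
  by case: (epsilon nu Q) => //; rewrite ltNge leNye.
have [x [Hx xe]] : exists x : R, (ga <= x%:E)%E /\ x < e.
  move: Hlt; rewrite He; case: ga => [y||] //.
  - by rewrite lte_fin => H; exists y.
  - by move=> _; exists (e - 1); rewrite leNye; split => //; lra.
have [gz|gnz] := eqVneq (q * Q) 0.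
  have Efr : f = r by rewrite Hf gz add0r.
  by rewrite gz /truncation size_poly0 big_ord0 leey Efr.
have gQ : (q * Q) %% Q = 0 by apply: modp_mull.
have [k [k0 [del [Htr Hk Hdel]]]] := main_claim Hv HK He HQs gnz gQ.
have Hg : q * Q = f - r by rewrite Hf addrK.
rewrite Hg in Hk Hdel.
have kge1 : (1 <= (k%:R : R)) by rewrite ler1n.
have bound : forall (c y : R), (ga <= y%:E)%E -> (c%:E <= nu f)%E -> (c%:E <= nu r)%E ->
    c - k%:R * y <= del - k%:R * e.
  move=> c y Hy Hcf Hcr; have := key_ineq Hv k0 Hy Hcf Hcr; rewrite Hk lee_fin //.
have Eq : nu f = nu r.
  have strict : forall c, (c%:E <= nu f)%E -> (c%:E <= nu r)%E -> (c%:E < nu (f - r)%R)%E.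
    move=> c Hcf Hcr; apply: lt_le_trans Hdel; rewrite lte_fin.
    have := bound c x Hx Hcf Hcr.
    have : 0 < k%:R * (e - x) by apply: mulr_gt0; [rewrite ltr0n | lra].
    lra.
  case: (ltgtP (nu f) (nu r)) => // H.
  - have fnz : f != 0 by apply/negP => /eqP fz; move: H; rewrite fz nu0 // ltNge leey.
    have Hc := nu_fin Hv fnz.
    have := strict (fine (nu f)); rewrite -Hc lexx (ltW H) => /(_ isT isT) Hs.
    have := nuD (f - r) r Hv; rewrite subrK ge_min => /orP[|].
    + by move/(lt_le_trans Hs); rewrite ltxx.
    + by rewrite leNgt H.
  - have rnz : r != 0 by apply/negP => /eqP rz; move: H; rewrite rz nu0 // ltNge leey.
    have Hc := nu_fin Hv rnz.
    have := strict (fine (nu r)); rewrite -Hc lexx (ltW H) => /(_ isT isT) Hs.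
    have := nuB f (f - r) Hv; rewrite (_ : f - (f - r) = r); last by ring.
    rewrite ge_min => /orP[|].
    + by rewrite leNgt H.
    + by move/(lt_le_trans Hs); rewrite ltxx.
split => //.
have fnz : f != 0.
  apply/negP => /eqP fz; move/eqP: gnz; apply; rewrite Hg fz.
  have : nu r = +oo%E by rewrite -Eq fz nu0.
  by case: Hv => H0 _ _ _ /H0 ->; rewrite subr0.
have Hc := nu_fin Hv fnz.
set c := fine (nu f) in Hc.
have Hcf : (c%:E <= nu f)%E by rewrite Hc.
have Hcr : (c%:E <= nu r)%E by rewrite -Eq Hc.
rewrite Htr Hc.
rewrite He in Hlt; move: Hx bound Hlt; case: ga => [y||] // Hy bound Hlt.
- have := bound c y (lexx _) Hcf Hcr.
  move: Hlt; rewrite lte_fin => Hye.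
  have : 0 <= (k%:R - 1) * (e - y) by apply: mulr_ge0; lra.
  by rewrite He -EFinB -EFinD lee_fin; nra.
- exfalso.
  have := bound c x (leNye _) Hcf Hcr.
  have H2 := bound c (e - (del - c) - 1) (leNye _) Hcf Hcr.
  have : 0 < k%:R * (e - x) by apply: mulr_gt0; [rewrite ltr0n | lra].
  move=> H3 H1.
  have H4 : 0 < del - c by nra.
  have : 0 <= (k%:R - 1) * (del - c) by apply: mulr_ge0; lra.
  nra.
Qed.
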